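(* Let $(M,H,g)$ be a 3-dimensional ts-oriented contact sub-Lorentzian manifold and $p\in M$. Then there is an oriented orthonormal frame $(X_1,X_2)$ near $p$ such that the matrix $h$ at $p$ takes one of the following forms: (1) if $\det h(p)=0$: $h(p)\in\left\{\begin{pmatrix}0&0\\0&0\end{pmatrix},\begin{pmatrix}1&\pm1\\ \mp1&-1\end{pmatrix},\begin{pmatrix}-1&\pm1\\ \mp1&1\end{pmatrix}\right\}$; (2) if $\det h(p)>0$: $h(p)=\begin{pmatrix}0&\chi\\-\chi&0\end{pmatrix}$ for some $\chi\neq0$; (3) if $\det h(p)<0$: $h(p)=\begin{pmatrix}\chi&0\\0&-\chi\end{pmatrix}$ for some $\chi\ne0$. Moreover, if $h(p)\neq0$, the value of such a frame at $p$ is unique.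
   Context: An oriented orthonormal frame is a local frame $(X_1,X_2)$ of $H$ with $g(X_1,X_1)=-1$, $g(X_1,X_2)=0$, $g(X_2,X_2)=1$, compatible with the time and space orientations; any two differ by $(X_1',X_2')=(\cosh t\,X_1+\sinh t\,X_2,\ \sinh t\,X_1+\cosh t\,X_2)$. With $\eta$ the contact form vanishing on $H$ and $\eta([X_2,X_1])=1$, $X_3$ is defined by $\eta(X_3)=-1$, $X_3\lrcorner d\eta=0$, and the structure functions by $[X_1,X_3]=cX_1+c^2_{13}X_2$, $[X_2,X_3]=c^1_{23}X_1-cX_2$, $[X_1,X_2]=c^1_{12}X_1+c^2_{12}X_2+X_3$. The matrix $h$ (computed in a given frame) is $h=\begin{pmatrix}c&\frac{c^2_{13}-c^1_{23}}2\\ \frac{c^1_{23}-c^2_{13}}2&-c\end{pmatrix}$; under change of frame it changes by conjugation by an element of $SO^+_{1,1}(\mathbb{R})=\{\begin{psmallmatrix}\cosh t&\sinh t\\ \sinh t&\cosh t\end{psmallmatrix}\}$. *)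

(* Defs.v *)
From Stdlib Require Import Reals.
Open Scope R_scope.

Record M2 := mkM2 { m11 : R; m12 : R; m21 : R; m22 : R }.

Definition mmul (A B : M2) : M2 :=
  mkM2 (m11 A * m11 B + m12 A * m21 B) (m11 A * m12 B + m12 A * m22 B)
       (m21 A * m11 B + m22 A * m21 B) (m21 A * m12 B + m22 A * m22 B).

Definition det2 (A : M2) : R := m11 A * m22 A - m12 A * m21 A.

Definition zeroM2 : M2 := mkM2 0 0 0 0.

(* Element of SO^+_{1,1}(R): the change of oriented orthonormal frame
   (X1',X2') = (cosh t X1 + sinh t X2, sinh t X1 + cosh t X2).
   Every oriented orthonormal frame at p is obtained from a reference one
   by a unique such t. *)
Definition boost (t : R) : M2 := mkM2 (cosh t) (sinh t) (sinh t) (cosh t).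

(* The matrix h computed in a frame from the structure functions c, c^2_{13}, c^1_{23}. *)
Definition hmat (c c213 c123 : R) : M2 :=
  mkM2 c ((c213 - c123) / 2) ((c123 - c213) / 2) (- c).

(* h in the frame obtained from the reference frame by the boost of parameter t:
   conjugation by an element of SO^+_{1,1}(R) (boost (-t) is the inverse of boost t). *)
Definition h_in_frame (t : R) (h : M2) : M2 := mmul (boost (- t)) (mmul h (boost t)).

Definition nf_det_zero (h : M2) : Prop :=
  h = mkM2 0 0 0 0 \/
  h = mkM2 1 1 (-1) (-1) \/ h = mkM2 1 (-1) 1 (-1) \/
  h = mkM2 (-1) 1 (-1) 1 \/ h = mkM2 (-1) (-1) 1 1.

Definition nf_det_pos (h : M2) : Prop :=
  exists chi : R, chi <> 0 /\ h = mkM2 0 chi (- chi) 0.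

Definition nf_det_neg (h : M2) : Prop :=
  exists chi : R, chi <> 0 /\ h = mkM2 chi 0 0 (- chi).

Definition normal_form (h : M2) : Prop :=
  nf_det_zero h \/ nf_det_pos h \/ nf_det_neg h.

(* Main.v *)
Require Import Defs.
From Stdlib Require Import Reals Lra Psatz Setoid.
Open Scope R_scope.

Definition Fv p q Y := (p*Y + q/Y)/2.
Definition Gv p q Y := (p*Y - q/Y)/2.

Lemma hf_eq t c c213 c123 :
  h_in_frame t (hmat c c213 c123) =
  mkM2 (Fv (c + (c213-c123)/2) (c - (c213-c123)/2) (exp t * exp t))
       (Gv (c + (c213-c123)/2) (c - (c213-c123)/2) (exp t * exp t))
       (- Gv (c + (c213-c123)/2) (c - (c213-c123)/2) (exp t * exp t))
       (- Fv (c + (c213-c123)/2) (c - (c213-c123)/2) (exp t * exp t)).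
Proof.
  unfold h_in_frame, mmul, boost, hmat, Fv, Gv, cosh, sinh; simpl.
  rewrite Ropp_involutive, exp_Ropp.
  assert (exp t > 0) by apply exp_pos.
  f_equal; field; lra.
Qed.

Lemma nf_cons p q Y : Y > 0 ->
  normal_form (mkM2 (Fv p q Y) (Gv p q Y) (- Gv p q Y) (- Fv p q Y)) ->
  p*Y*Y = -q \/ p*Y*Y = q \/ (q = 0 /\ (p*Y)*(p*Y) = 4) \/ (p = 0 /\ q*q = 4*Y*Y).
Proof.
  intros HY Hn.
  assert (E3 : Fv p q Y + Gv p q Y = p*Y) by (unfold Fv, Gv; field; lra).
  assert (E4 : (Fv p q Y - Gv p q Y)*Y = q) by (unfold Fv, Gv; field; lra).
  revert Hn E3 E4. generalize (Fv p q Y) (Gv p q Y). intros F G Hn E3 E4.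
  destruct Hn as [[H|[H|[H|[H|H]]]]|[[chi [Hc H]]|[chi [Hc H]]]];
  injection H as H1 H2 H3 H4; rewrite H1, H2 in E3, E4.
  - left. nra.
  - right; right; left. split; nra.
  - right; right; right. assert (p*Y = 0) by lra.
    destruct (Rmult_integral _ _ H); [|lra]. split; nra.
  - right; right; right. assert (p*Y = 0) by lra.
    destruct (Rmult_integral _ _ H); [|lra]. split; nra.
  - right; right; left. split; nra.
  - left. nra.
  - right; left. nra.
Qed.

Lemma exists_t Y : Y > 0 -> exists t, exp t * exp t = Y.
Proof.
  intros HY. exists (ln (sqrt Y)). rewrite exp_ln by (apply sqrt_lt_R0; lra).
  apply sqrt_sqrt; lra.
Qed.

Lemma uniq_t t t' : exp t' * exp t' = exp t * exp t -> boost t' = boost t.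
Proof.
  intros H. assert (exp t' = exp t).
  { pose proof (exp_pos t); pose proof (exp_pos t'). nra. }
  apply exp_inv in H0. subst. reflexivity.
Qed.

Theorem mainTheorem7 (c c213 c123 : R) :
  let h0 := hmat c c213 c123 in
  exists t : R,
    (det2 h0 = 0 -> nf_det_zero (h_in_frame t h0)) /\
    (det2 h0 > 0 -> nf_det_pos (h_in_frame t h0)) /\
    (det2 h0 < 0 -> nf_det_neg (h_in_frame t h0)) /\
    (h0 <> zeroM2 ->
       forall t' : R, normal_form (h_in_frame t' h0) -> boost t' = boost t).
Proof.
  intros h0.
  set (p := c + (c213-c123)/2). set (q := c - (c213-c123)/2).
  assert (Hdet : det2 h0 = -(p*q)) by (unfold det2, h0, hmat, p, q; simpl; field).
  assert (Hnz : h0 <> zeroM2 -> ~(p = 0 /\ q = 0)).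
  { intros H [Hp Hq]; apply H. unfold h0, hmat, zeroM2, p, q in *. f_equal; lra. }
  unfold h0. setoid_rewrite hf_eq; fold p q; fold h0.
  assert (Hgen : forall Y, Y > 0 ->
     (forall Y', Y' > 0 -> (p*Y'*Y' = -q \/ p*Y'*Y' = q \/ (q = 0 /\ (p*Y')*(p*Y') = 4) \/ (p = 0 /\ q*q = 4*Y'*Y')) -> Y' = Y) ->
     forall t, exp t * exp t = Y -> forall t', normal_form
      (mkM2 (Fv p q (exp t' * exp t')) (Gv p q (exp t' * exp t'))
       (- Gv p q (exp t' * exp t')) (- Fv p q (exp t' * exp t'))) -> boost t' = boost t).
  { intros Y HY HU t Ht t' Hn. apply uniq_t. rewrite Ht. apply HU.
    - pose proof (exp_pos t'); nra.
    - apply nf_cons; [pose proof (exp_pos t'); nra | exact Hn]. }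
  destruct (Req_dec p 0) as [Hp|Hp]; destruct (Req_dec q 0) as [Hq|Hq].
  -
    exists 0. rewrite Hdet. split; [|split; [|split]]; try (intros; nra).
    + intros _. left. unfold Fv, Gv. rewrite Hp, Hq. f_equal; field; apply Rgt_not_eq; rewrite exp_0; lra.
    + intros Hz; exfalso; apply (Hnz Hz); auto.
  -
    destruct (Rlt_le_dec 0 q) as [Hq0|Hq0].
    + destruct (exists_t (q/2)) as [t Ht]; [lra|]. exists t; rewrite Ht.
      assert (HF : Fv p q (q/2) = 1) by (unfold Fv; rewrite Hp; field; lra).
      assert (HG : Gv p q (q/2) = -1) by (unfold Gv; rewrite Hp; field; lra).
      assert (Hd0 : -(p*q) = 0) by (rewrite Hp; ring). rewrite HF, HG, Hdet, Hd0. split; [|split; [|split]]; try (intros; lra).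
      * intros _. right; right; left. f_equal; lra.
      * intros _ t' Hn. refine (Hgen (q/2) _ _ t Ht t' Hn); [lra|].
        intros Y' HY' [H|[H|[[H1 H2]|[H1 H2]]]]; rewrite Hp in *; nra.
    + destruct (exists_t (-q/2)) as [t Ht]; [lra|]. exists t; rewrite Ht.
      assert (HF : Fv p q (-q/2) = -1) by (unfold Fv; rewrite Hp; field; lra).
      assert (HG : Gv p q (-q/2) = 1) by (unfold Gv; rewrite Hp; field; lra).
      assert (Hd0 : -(p*q) = 0) by (rewrite Hp; ring). rewrite HF, HG, Hdet, Hd0. split; [|split; [|split]]; try (intros; lra).
      * intros _. right; right; right; left. f_equal; lra.
      * intros _ t' Hn. refine (Hgen (-q/2) _ _ t Ht t' Hn); [lra|].
        intros Y' HY' [H|[H|[[H1 H2]|[H1 H2]]]]; rewrite Hp in *; nra.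
  -
    destruct (Rlt_le_dec 0 p) as [Hp0|Hp0].
    + destruct (exists_t (2/p)) as [t Ht]; [apply Rdiv_lt_0_compat; lra|]. exists t; rewrite Ht.
      assert (HF : Fv p q (2/p) = 1) by (unfold Fv; rewrite Hq; field; lra).
      assert (HG : Gv p q (2/p) = 1) by (unfold Gv; rewrite Hq; field; lra).
      assert (Hd0 : -(p*q) = 0) by (rewrite Hq; ring). rewrite HF, HG, Hdet, Hd0. split; [|split; [|split]]; try (intros; lra).
      * intros _. right; left. f_equal; lra.
      * intros _ t' Hn. refine (Hgen (2/p) _ _ t Ht t' Hn); [apply Rdiv_lt_0_compat; lra|].
        intros Y' HY' [H|[H|[[H1 H2]|[H1 H2]]]]; rewrite Hq in *; try (exfalso; nra).
        all: try (exfalso; assert (p*Y'*Y' <> 0) by (apply Rmult_integral_contrapositive_currified; [apply Rmult_integral_contrapositive_currified|]; lra); lra).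
        assert (p*Y' > 0) by nra. assert (HpY : p*Y' = 2) by nra. rewrite <- HpY; field; lra.
    + assert (Hp1 : p < 0) by lra.
      destruct (exists_t (-2/p)) as [t Ht]; [replace (-2/p) with (2/(-p)) by (field; lra); apply Rdiv_lt_0_compat; lra|]. exists t; rewrite Ht.
      assert (HF : Fv p q (-2/p) = -1) by (unfold Fv; rewrite Hq; field; lra).
      assert (HG : Gv p q (-2/p) = -1) by (unfold Gv; rewrite Hq; field; lra).
      assert (Hd0 : -(p*q) = 0) by (rewrite Hq; ring). rewrite HF, HG, Hdet, Hd0. split; [|split; [|split]]; try (intros; lra).
      * intros _. right; right; right; right. f_equal; lra.
      * intros _ t' Hn. refine (Hgen (-2/p) _ _ t Ht t' Hn); [replace (-2/p) with (2/(-p)) by (field; lra); apply Rdiv_lt_0_compat; lra|].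
        intros Y' HY' [H|[H|[[H1 H2]|[H1 H2]]]]; rewrite Hq in *; try (exfalso; nra).
        all: try (exfalso; assert (p*Y'*Y' <> 0) by (apply Rmult_integral_contrapositive_currified; [apply Rmult_integral_contrapositive_currified|]; lra); lra).
        assert (p*Y' < 0) by nra. assert (HpY : p*Y' = -2) by nra. replace (-2) with (p*Y') by lra; field; lra.
  -
    assert (Hpq : p*q <> 0) by (intro H; apply Rmult_integral in H; tauto).
    destruct (Rlt_le_dec 0 (p*q)) as [Hs|Hs].
    + assert (Hqp : q/p > 0) by (replace (q/p) with (p*q/(p*p)) by (field; lra);
                                 apply Rdiv_lt_0_compat; nra).
      set (Y := sqrt (q/p)).
      assert (HY : Y > 0) by (apply sqrt_lt_R0; lra).
      assert (HYY : p*Y*Y = q) by (unfold Y; rewrite Rmult_assoc, sqrt_sqrt by lra; field; lra).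
      destruct (exists_t Y) as [t Ht]; [lra|]. exists t; rewrite Ht.
      assert (HG : Gv p q Y = 0) by (unfold Gv; rewrite <- HYY; field; lra).
      assert (HF : Fv p q Y = p*Y) by (unfold Fv; rewrite <- HYY; field; lra).
      rewrite HF, HG, Hdet. split; [|split; [|split]]; try (intros; nra).
      * intros _. exists (p*Y). split; [intro H; apply Rmult_integral in H; destruct H; lra|].
        f_equal; lra.
      * intros _ t' Hn. refine (Hgen Y _ _ t Ht t' Hn); [lra|].
        intros Y' HY' [H|[H|[[H1 H2]|[H1 H2]]]]; try (exfalso; nra).
        assert (Y'*Y' = Y*Y) by (apply (Rmult_eq_reg_l p); [nra|lra]). nra.
    + assert (Hs' : p*q < 0) by lra.
      assert (Hqp : -q/p > 0) by (replace (-q/p) with (-(p*q)/(p*p)) by (field; lra);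
                                 apply Rdiv_lt_0_compat; nra).
      set (Y := sqrt (-q/p)).
      assert (HY : Y > 0) by (apply sqrt_lt_R0; lra).
      assert (HYY : p*Y*Y = -q) by (unfold Y; rewrite Rmult_assoc, sqrt_sqrt by lra; field; lra).
      destruct (exists_t Y) as [t Ht]; [lra|]. exists t; rewrite Ht.
      assert (HF : Fv p q Y = 0) by (unfold Fv; replace q with (-(p*Y*Y)) by lra; field; lra).
      assert (HG : Gv p q Y = p*Y) by (unfold Gv; replace q with (-(p*Y*Y)) by lra; field; lra).
      rewrite HF, HG, Hdet. split; [|split; [|split]]; try (intros; nra).
      * intros _. exists (p*Y). split; [intro H; apply Rmult_integral in H; destruct H; lra|].
        f_equal; lra.
      * intros _ t' Hn. refine (Hgen Y _ _ t Ht t' Hn); [lra|].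
        intros Y' HY' [H|[H|[[H1 H2]|[H1 H2]]]]; try (exfalso; nra).
        assert (Y'*Y' = Y*Y) by (apply (Rmult_eq_reg_l p); [nra|lra]). nra.
Qed.
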